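(* Let $N$ be a well-formed system (coherent and $\vdash N:\mathbf{ok}$) in the calculus with multiset entry policies. If $N\to N'$, then $N'$ is well-formed; in particular $\vdash N':\mathbf{ok}$.
   Context: Fix disjoint sets $\mathsf{Act}$ (actions) and $\mathsf{Loc}$ (localities). A policy is a multiset over $\mathsf{Act}\cup\mathsf{Loc}$ with finite support and multiplicities in $\mathbb{N}\cup\{\omega\}$; $\cup$ denotes multiset union (multiplicities add, $\omega$ absorbing), $T_1\ \mathtt{enforces}\ T_2$ means multiset inclusion $T_1\subseteq T_2$ (pointwise $\le$), and $T^\omega$ is the multiset giving multiplicity $\omega$ to every element of the support of $T$. Agents: $P ::= \mathbf{nil} \mid a.P \mid \mathbf{go}_T\, l.P \mid P\,|\,Q \mid\ !P$ ($T$ a policy). Systems: $N ::= \mathbf{0} \mid l[\![M \rhd P]\!] \mid N_1\parallel N_2$, site names pairwise distinct, $M^l$ the membrane of $l$. A membrane is $M=(M_t,M_p)$ with $M_t$ a partial function $\mathsf{Loc}\to\{\mathtt{loc},\mathtt{lgood},\mathtt{lbad}\}$ and $M_p$ a policy. The judgement $\vdash P:T$ is the least relation with: $\vdash\mathbf{nil}:T$; $\vdash a.P:T\cup\{a\}$ if $\vdash P:T$; $\vdash\mathbf{go}_{T'}\,l.P:T\cup\{l\}$ if $\vdash P:T'$; $\vdash P|Q:T_1\cup T_2$ if $\vdash P:T_1$ and $\vdash Q:T_2$; $\vdash\ !P:T'$ if $\vdash P:T$ and $T^\omega\subseteq T'$. Structural equivalence $\equiv$: least congruence on systems such that inside a site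 $|$ is commutative, associative with unit $\mathbf{nil}$, $l[\![M\rhd\ !P|Q]\!]\equiv l[\![M\rhd P|!P|Q]\!]$, and $\parallel$ is commutative, associative with unit $\mathbf{0}$. Reduction: (act) $l[\![M\rhd a.P|Q]\!]\to l[\![M\rhd P|Q]\!]$; (par) $N_1\to N_1'$ implies $N_1\parallel N_2\to N_1'\parallel N_2$; (struct) $N\equiv N_1\to N_1'\equiv N'$ implies $N\to N'$; (mig) $k[\![M^k\rhd\mathbf{go}_T\,l.P|Q]\!]\parallel l[\![M^l\rhd R]\!]\to k[\![M^k\rhd Q]\!]\parallel l[\![M^l\rhd P|R]\!]$ provided: if $M^l_t(k)=\mathtt{lgood}$ then $T\subseteq M^l_p$, else $\vdash P:M^l_p$. Trust order $<:$ reflexive with $\mathtt{loc}<:\mathtt{lbad}$, $\mathtt{loc}<:\mathtt{lgood}$. Site $k$ trustworthy iff $M^k_t(k)=\mathtt{lgood}$. $N$ coherent iff for every trustworthy $k$ and site $l$ with $M^k_t(l)$ defined, $M^k_t(l)<:M^l_t(l)$. An agent is a thread if it is not of the form $P_1|P_2$; every agent can be written $P_1|\dots|P_n$ ($n\ge1$) with each $P_i$ a thread. $\vdash N:\mathbf{ok}$: $\vdash\mathbf{0}:\mathbf{ok}$; $\vdash N_1\parallel N_2:\mathbf{ok}$ if both components are; $\vdash l[\![M\rhd P_1|\dots|P_n]\!]:\mathbf{ok}$ if $l$ trustworthy, each $P_i$ is a thread and $\vdash P_i:M_p$ for all $i$; $\vdash l[\![M\rhd P]\!]:\mathbf{ok}$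 if $l$ not trustworthy. *)

(* Defs.v *)
From Stdlib Require Import List ClassicalDescription.
Import ListNotations.
Set Implicit Arguments.

Inductive mult : Type := MFin (n : nat) | MOmega.

Definition madd (a b : mult) : mult :=
  match a, b with
  | MFin m, MFin n => MFin (m + n)
  | _, _ => MOmega
  end.

Definition mle (a b : mult) : Prop :=
  match a, b with
  | MFin m, MFin n => m <= n
  | _, MOmega => True
  | MOmega, MFin _ => False
  end.

Section Calculus.
Variables Act Loc : Type.

(* Act and Loc are disjoint: elements of policies live in the sum type. *)
Definition elt := (Act + Loc)%type.

Record policy := Policy {
  pol :> elt -> mult;
  pol_fin : exists s : list elt, forall x, pol x <> MFin 0 -> In x s
}.

Lemma madd_nz a b : madd a b <> MFin 0 -> a <> MFin 0 \/ b <> MFin 0.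
Proof.
  destruct a as [m|], b as [n|]; simpl; intro H;
    try (left; discriminate); try (right; discriminate).
  destruct m; [right; exact H | left; discriminate].
Qed.

Definition punion (T1 T2 : policy) : policy.
Proof.
  refine (@Policy (fun x => madd (T1 x) (T2 x)) _).
  destruct (pol_fin T1) as [s1 H1], (pol_fin T2) as [s2 H2].
  exists (s1 ++ s2). intros x Hx. apply in_or_app.
  destruct (madd_nz _ _ Hx); [left; auto | right; auto].
Defined.

Definition psing (e : elt) : policy.
Proof.
  refine (@Policy (fun x => if excluded_middle_informative (x = e) then MFin 1 else MFin 0) _).
  exists [e]. intros x. destruct (excluded_middle_informative (x = e)) as [E|E].
  - intros _. left. auto.
  - intros H. exfalso. apply H. reflexivity.
Defined.

Definition enforces (T1 T2 : policy) : Prop := forall x, mle (T1 x) (T2 x).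

Definition pomega (T : policy) : policy.
Proof.
  refine (@Policy (fun x => match T x with MFin 0 => MFin 0 | _ => MOmega end) _).
  destruct (pol_fin T) as [s H]. exists s. intros x Hx. apply H.
  intro E. apply Hx. rewrite E. reflexivity.
Defined.

Inductive agent : Type :=
  | ANil : agent
  | APre : Act -> agent -> agent
  | AGo : policy -> Loc -> agent -> agent
  | APar : agent -> agent -> agent
  | ABang : agent -> agent.

Inductive trust : Type := tloc | lgood | lbad.

Definition trust_le (t1 t2 : trust) : Prop :=
  t1 = t2 \/ (t1 = tloc /\ (t2 = lbad \/ t2 = lgood)).

Record membrane := Membrane {
  mt : Loc -> option trust;
  mp : policy
}.

Inductive system : Type :=
  | SZero : system
  | SSite : Loc -> membrane -> agent -> system
  | SPar : system -> system -> system.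

Fixpoint sites (N : system) : list Loc :=
  match N with
  | SZero => []
  | SSite l _ _ => [l]
  | SPar N1 N2 => sites N1 ++ sites N2
  end.

Definition distinct_sites (N : system) : Prop := NoDup (sites N).

Fixpoint has_site (N : system) (l : Loc) (M : membrane) : Prop :=
  match N with
  | SZero => False
  | SSite l' M' _ => l' = l /\ M' = M
  | SPar N1 N2 => has_site N1 l M \/ has_site N2 l M
  end.

Inductive typing : agent -> policy -> Prop :=
  | ty_nil T : typing ANil T
  | ty_act a P T : typing P T -> typing (APre a P) (punion T (psing (inl a)))
  | ty_go T' l P T : typing P T' -> typing (AGo T' l P) (punion T (psing (inr l)))
  | ty_par P Q T1 T2 : typing P T1 -> typing Q T2 -> typing (APar P Q) (punion T1 T2)
  | ty_bang P T T' : typing P T -> enforces (pomega T) T' -> typing (ABang P) T'.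

Inductive aeq : agent -> agent -> Prop :=
  | aeq_refl P : aeq P P
  | aeq_sym P Q : aeq P Q -> aeq Q P
  | aeq_trans P Q R : aeq P Q -> aeq Q R -> aeq P R
  | aeq_par P P' Q Q' : aeq P P' -> aeq Q Q' -> aeq (APar P Q) (APar P' Q')
  | aeq_comm P Q : aeq (APar P Q) (APar Q P)
  | aeq_assoc P Q R : aeq (APar (APar P Q) R) (APar P (APar Q R))
  | aeq_unit P : aeq (APar P ANil) P
  | aeq_bang P Q : aeq (APar (ABang P) Q) (APar P (APar (ABang P) Q)).

Inductive seq : system -> system -> Prop :=
  | seq_refl N : seq N N
  | seq_sym N1 N2 : seq N1 N2 -> seq N2 N1
  | seq_trans N1 N2 N3 : seq N1 N2 -> seq N2 N3 -> seq N1 N3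
  | seq_site l M P Q : aeq P Q -> seq (SSite l M P) (SSite l M Q)
  | seq_par N1 N1' N2 N2' : seq N1 N1' -> seq N2 N2' -> seq (SPar N1 N2) (SPar N1' N2')
  | seq_comm N1 N2 : seq (SPar N1 N2) (SPar N2 N1)
  | seq_assoc N1 N2 N3 : seq (SPar (SPar N1 N2) N3) (SPar N1 (SPar N2 N3))
  | seq_unit N : seq (SPar N SZero) N.

Definition mig_ok (Ml : membrane) (k : Loc) (T : policy) (P : agent) : Prop :=
  (mt Ml k = Some lgood /\ enforces T (mp Ml)) \/
  (mt Ml k <> Some lgood /\ typing P (mp Ml)).

Inductive red : system -> system -> Prop :=
  | red_act l M a P Q :
      red (SSite l M (APar (APre a P) Q)) (SSite l M (APar P Q))
  | red_par N1 N1' N2 : red N1 N1' -> red (SPar N1 N2) (SPar N1' N2)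
  | red_struct N N1 N1' N' : seq N N1 -> red N1 N1' -> seq N1' N' -> red N N'
  | red_mig k Mk T l P Q Ml R :
      mig_ok Ml k T P ->
      red (SPar (SSite k Mk (APar (AGo T l P) Q)) (SSite l Ml R))
          (SPar (SSite k Mk Q) (SSite l Ml (APar P R))).

Definition trustworthy (M : membrane) (k : Loc) : Prop := mt M k = Some lgood.

Definition coherent (N : system) : Prop :=
  forall k Mk, has_site N k Mk -> trustworthy Mk k ->
  forall l Ml, has_site N l Ml ->
  forall t, mt Mk l = Some t ->
  exists t', mt Ml l = Some t' /\ trust_le t t'.

Fixpoint threads (P : agent) : list agent :=
  match P with
  | APar P1 P2 => threads P1 ++ threads P2
  | _ => [P]
  end.

Fixpoint ok (N : system) : Prop :=
  match N with
  | SZero => True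
  | SPar N1 N2 => ok N1 /\ ok N2
  | SSite l M P => trustworthy M l -> forall Q, In Q (threads P) -> typing Q (mp M)
  end.

End Calculus.

Arguments ANil {Act Loc}.
Arguments SZero {Act Loc}.

(* Main.v *)
Require Import Defs.
From Stdlib Require Import List Lia FunctionalExtensionality ProofIrrelevance.
Import ListNotations.

Lemma policy_ext {Act Loc : Type} (A B : policy Act Loc) :
  (forall x, A x = B x) -> A = B.
Proof.
  destruct A as [fa pa], B as [fb pb]; simpl; intros H.
  assert (fa = fb) by (apply functional_extensionality; auto). subst.
  f_equal. apply proof_irrelevance.
Qed.

Definition mminus (a b : mult) : mult :=
  match a, b with
  | MFin n, MFin m => MFin (n - m)
  | MOmega, _ => MOmega
  | MFin n, MOmega => MFin 0
  end.

Definition pminus {Act Loc : Type} (A B : policy Act Loc) : policy Act Loc.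
Proof.
  refine (@Policy Act Loc (fun x => mminus (A x) (B x)) _).
  destruct (pol_fin A) as [s H]. exists s. intros x Hx. apply H.
  intro E. apply Hx. rewrite E. destruct (B x); reflexivity.
Defined.

Lemma mle_trans a b c : mle a b -> mle b c -> mle a c.
Proof. destruct a, b, c; simpl; intros; auto; try lia; contradiction. Qed.

Lemma enf_trans {Act Loc : Type} (A B C : policy Act Loc) :
  enforces A B -> enforces B C -> enforces A C.
Proof. unfold enforces; intros; eapply mle_trans; eauto. Qed.

Lemma enf_unionl {Act Loc : Type} (A B : policy Act Loc) : enforces A (punion A B).
Proof. intro x; simpl. destruct (A x), (B x); simpl; auto; lia. Qed.

Lemma punion_comm {Act Loc : Type} (A B : policy Act Loc) : punion A B = punion B A.
Proof. apply policy_ext; intro x; simpl. destruct (A x), (B x); simpl; auto. f_equal; lia. Qed.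

Lemma enf_unionr {Act Loc : Type} (A B : policy Act Loc) : enforces B (punion A B).
Proof. rewrite punion_comm. apply enf_unionl. Qed.

Lemma enf_omega {Act Loc : Type} (A : policy Act Loc) : enforces A (pomega A).
Proof. intro x; simpl. destruct (A x) as [[|n]|]; simpl; auto. Qed.

Lemma split_union {Act Loc : Type} (A B T : policy Act Loc) :
  enforces (punion A B) T -> enforces B (pminus T A) /\ T = punion A (pminus T A).
Proof.
  intros H. split.
  - intro x. specialize (H x). simpl in *.
    destruct (A x), (B x), (T x); simpl in *; auto; try lia; contradiction.
  - apply policy_ext; intro x. specialize (H x). simpl in *.
    destruct (A x), (B x), (T x); simpl in *; auto; try contradiction. f_equal; lia.
Qed.

Lemma weaken {Act Loc : Type} (P : agent Act Loc) T :
  typing P T -> forall T', enforces T T' -> typing P T'.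
Proof.
  induction 1; intros T0 HE.
  - constructor.
  - rewrite punion_comm in HE. destruct (split_union _ _ _ HE) as [H1 H2].
    rewrite H2, punion_comm. constructor. auto.
  - rewrite punion_comm in HE. destruct (split_union _ _ _ HE) as [H1 H2].
    rewrite H2, punion_comm. constructor. auto.
  - destruct (split_union _ _ _ HE) as [H1 H2]. rewrite H2. constructor.
    + assumption.
    + apply IHtyping2. auto.
  - econstructor; eauto. eapply enf_trans; eauto.
Qed.

Lemma threads_typed {Act Loc : Type} (P : agent Act Loc) T :
  typing P T -> forall R, In R (threads P) -> typing R T.
Proof.
  induction 1; simpl; intros R0 HR;
    try (destruct HR as [<-|[]]; econstructor; eauto).
  apply in_app_or in HR. destruct HR as [HR|HR].
  - eapply weaken; [apply IHtyping1; auto | apply enf_unionl].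
  - eapply weaken; [apply IHtyping2; auto | apply enf_unionr].
Qed.

Definition TT {Act Loc : Type} (T : policy Act Loc) (P : agent Act Loc) :=
  forall R, In R (threads P) -> typing R T.

Lemma aeq_TT {Act Loc : Type} (P Q : agent Act Loc) :
  aeq P Q -> forall T, TT T P <-> TT T Q.
Proof.
  unfold TT; induction 1; intros T; simpl.
  - tauto.
  - rewrite IHaeq; tauto.
  - rewrite IHaeq1; auto.
  - specialize (IHaeq1 T); specialize (IHaeq2 T). split; intros H' R HR;
      apply in_app_or in HR; destruct HR as [HR|HR].
    + apply (proj1 IHaeq1); [intros R' HR'; apply H'; apply in_or_app; auto | exact HR].
    + apply (proj1 IHaeq2); [intros R' HR'; apply H'; apply in_or_app; auto | exact HR].
    + apply (proj2 IHaeq1); [intros R' HR'; apply H'; apply in_or_app; auto | exact HR].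
    + apply (proj2 IHaeq2); [intros R' HR'; apply H'; apply in_or_app; auto | exact HR].
  - split; intros H' R HR; apply H'; apply in_app_or in HR; apply in_or_app; tauto.
  - rewrite app_assoc; tauto.
  - split; intros H' R HR.
    + apply H'; apply in_or_app; auto.
    + apply in_app_or in HR; destruct HR as [HR|[<-|[]]]; auto. constructor.
  - split; intros H' R HR.
    + assert (HB : typing (ABang P) T) by (apply H'; left; auto).
      apply in_app_or in HR. destruct HR as [HR|HR].
      * inversion HB; subst. eapply weaken.
        -- eapply threads_typed; eauto.
        -- eapply enf_trans; [apply enf_omega|eauto].
      * apply H'; auto.
    + apply H'. destruct HR as [<-|HR]; apply in_or_app; right; simpl; auto.
Qed.

Lemma seq_props {Act Loc : Type} (N M : system Act Loc) :
  Defs.seq N M -> (ok N <-> ok M) /\ (forall l Ml, has_site N l Ml <-> has_site M l Ml).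
Proof.
  induction 1; simpl.
  - split; [tauto|]; tauto.
  - destruct IHseq as [A B]; split; [tauto|]; intros; rewrite B; tauto.
  - destruct IHseq1 as [A B], IHseq2 as [C D]; split; [tauto|];
      intros; rewrite B; auto.
  - split; [|tauto]. pose proof (aeq_TT _ _ H (mp M)) as HT. unfold TT in HT.
    split; intros H' Ht; apply HT; auto.
  - destruct IHseq1 as [A B], IHseq2 as [C D]; split; [tauto|];
      intros; rewrite B, D; tauto.
  - split; [tauto|]; tauto.
  - split; [tauto|]; tauto.
  - split; [tauto|]; tauto.
Qed.

Lemma red_sites {Act Loc : Type} (N N' : system Act Loc) :
  red N N' -> forall l M, has_site N' l M -> has_site N l M.
Proof.
  induction 1; simpl; intros; auto.
  - destruct H0; [left; apply IHred|right]; auto.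
  - apply seq_props in H. apply seq_props in H1. apply H. apply IHred. apply H1. auto.
Qed.

Lemma red_ok {Act Loc : Type} (N N' : system Act Loc) :
  red N N' -> coherent N -> ok N -> ok N'.
Proof.
  induction 1; intros Hc Hok.
  - simpl in *. intros Ht R HR. apply in_app_or in HR. destruct HR as [HR|HR].
    + assert (HA : typing (APre a P) (mp M)) by (apply Hok; auto; apply in_or_app; left; left; auto).
      inversion HA; subst. eapply weaken.
      * eapply threads_typed; eauto.
      * apply enf_unionl.
    + apply Hok; auto; apply in_or_app; auto.
  - simpl in *. destruct Hok; split; auto. apply IHred; auto.
    intros k Mk Hk Ht l Ml Hl t Et. apply (Hc k Mk (or_introl Hk) Ht l Ml (or_introl Hl) t Et).
  - apply seq_props in H. apply seq_props in H1. destruct H as [A B], H1 as [C D].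
    apply C. apply IHred; [|tauto].
    intros k Mk Hk Ht l Ml Hl t Et. apply (Hc k Mk (proj2 (B _ _) Hk) Ht l Ml (proj2 (B _ _) Hl) t Et).
  - simpl in *. destruct Hok as [Hk Hl]. split.
    + intros Ht R0 HR. apply Hk; auto.
    + intros Ht R0 HR. apply in_app_or in HR. destruct HR as [HR|HR]; [|apply Hl; auto].
      destruct H as [[H1 H2]|[H1 H2]].
      * destruct (Hc l Ml (or_intror (conj eq_refl eq_refl)) Ht k Mk
                    (or_introl (conj eq_refl eq_refl)) lgood H1) as [t' [E Hle]].
        assert (t' = lgood) by (destruct Hle as [<-|[Hx _]]; [auto|discriminate]).
        subst t'.
        assert (HG : typing (AGo T l P) (mp Mk)) by (apply Hk; [exact E| left; auto]).
        inversion HG; subst. eapply weaken; [eapply threads_typed; eauto|]; auto.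
      * eapply threads_typed; eauto.
Qed.

Theorem mainTheorem4 (Act Loc : Type) (N N' : system Act Loc) :
  distinct_sites N -> coherent N -> ok N -> red N N' ->
  coherent N' /\ ok N'.
Proof.
  intros _ Hc Hok Hr. split.
  - intros k Mk Hk Ht l Ml Hl t Et. apply (Hc k Mk (red_sites _ _ Hr _ _ Hk) Ht l Ml (red_sites _ _ Hr _ _ Hl) t Et).
  - eapply red_ok; eauto.
Qed.
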